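(* Let $f:\mathcal{X}\to\Delta^{k-1}$ be a classifier outputting confidence vectors. Let $P_S$ and $P_T$ be source and target distributions over $\mathcal{X}\times\mathcal{Y}$ with $k$ classes, and write $P_S(y)$, $P_T(y)$ for the source and target label distributions, viewed as distributions over one-hot vectors $\{0,1\}^k\cap\Delta^{k-1}$. Let $f_\# P_T(c)$ be the distribution of $f(x)$ for $x\sim P_T(x)$, and let $P_{\mathrm{pseudo}}(y)$ be the distribution of the one-hot vector $e_{\arg\max_j f_j(x)}$ for $x\sim P_T(x)$. Define $\hat\epsilon_{\mathrm{COT}}=W_\infty\bigl(f_\# P_T(c),P_S(y)\bigr)$. Then $$\hat\epsilon_{\mathrm{COT}}\ \ge\ 0.5\,W_\infty\bigl(P_{\mathrm{pseudo}}(y),P_T(y)\bigr)-W_\infty\bigl(P_S(y),P_T(y)\bigr).$$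
   Context: $\Delta^{k-1}=\{c\in\mathbb{R}^k: c_j\ge 0,\ \sum_j c_j=1\}$; $e_i$ is the $i$-th standard basis vector. For probability distributions $P,Q$ on $\mathbb{R}^k$, $W_\infty(P,Q)=\inf_{\pi\in\Pi(P,Q)}\int\|u-v\|_\infty\,d\pi(u,v)$ over couplings $\pi$ of $P$ and $Q$ (optimal transport distance with ground cost $\|u-v\|_\infty$). Ties in $\arg\max$ are broken by a fixed rule (e.g. smallest index). No assumption $P_S(y)=P_T(y)$ is made. *)

(* Defs.v *)
From HB Require Import structures.
From mathcomp Require Import all_boot all_order all_algebra.
From mathcomp Require Import all_classical all_reals all_analysis.
Set Implicit Arguments. Unset Strict Implicit. Unset Printing Implicit Defensive.
Import Order.TTheory GRing.Theory Num.Theory.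
Import numFieldNormedType.Exports.
Local Open Scope classical_set_scope.
Local Open Scope ring_scope.

(* R^k (row vectors) with its Borel sigma-algebra (generated by open sets of
   the product topology). *)
Definition Vk (R : realType) (k : nat) := g_sigma_algebraType (open : set (set 'rV[R]_k)).

(* Labels: k = n.+1 classes, 'I_n.+1, with the discrete sigma-algebra. *)
Definition label (n : nat) := 'I_n.+1.
HB.instance Definition _ n := Finite.on (label n).
HB.instance Definition _ n := isPointed.Build (label n) ord0.
HB.instance Definition _ n := @isMeasurable.Build default_measure_display
  (label n) discrete_measurable discrete_measurable0
  (@discrete_measurableC _) (@discrete_measurableU _).

Definition linf_dist (R : realType) (k : nat) (u v : 'rV[R]_k) : R :=
  \big[Num.max/0]_(i < k) `|u ord0 i - v ord0 i|.

Definition in_simplex (R : realType) (k : nat) (c : 'rV[R]_k) : Prop :=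
  (forall j, 0 <= c ord0 j) /\ \sum_(j < k) c ord0 j = 1.

Definition onehot (R : realType) (k : nat) (i : 'I_k) : 'rV[R]_k :=
  \row_(j < k) (i == j)%:R.

(* argmax with a fixed deterministic tie-breaking rule (that of Order.arg_max) *)
Definition argmax (R : realType) (n : nat) (c : 'rV[R]_n.+1) : 'I_n.+1 :=
  [arg max_(i > ord0) c ord0 i]%O.

Definition is_coupling (R : realType) (k : nat)
  (pi : probability (Vk R k * Vk R k)%type R) (P Q : set (Vk R k) -> \bar R) : Prop :=
  forall A : set (Vk R k), measurable A ->
    pi (fst @^-1` A) = P A /\ pi (snd @^-1` A) = Q A.

Definition Winf (R : realType) (k : nat) (P Q : set (Vk R k) -> \bar R) : \bar R :=
  ereal_inf [set (\int[pi]_z (linf_dist z.1 z.2)%:E)%E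
            | pi in [set pi : probability (Vk R k * Vk R k)%type R | is_coupling pi P Q]].

(* Main.v *)
Require Import Defs.
From HB Require Import structures.
From mathcomp Require Import all_boot all_order all_algebra.
From mathcomp Require Import all_classical all_reals all_analysis.
From mathcomp Require Import measurable_realfun.
From mathcomp Require Import lra.
Import Order.TTheory GRing.Theory Num.Theory.
Import numFieldNormedType.Exports.
Local Open Scope classical_set_scope.
Local Open Scope ring_scope.

Section Aux.
Variables (R : realType) (N : nat).

Lemma open_meas (A : set (Vk R N)) : open (A : set 'rV[R]_N) -> measurable A.
Proof. by move=> oA; apply: sub_gen_smallest. Qed.

Lemma coord_meas (i : 'I_N) :
  measurable_fun [set: Vk R N] (fun c : Vk R N => (c : 'rV[R]_N) ord0 i).
Proof.
apply: (measurability _ (RGenOpens.measurableE R)).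
move=> _ [_ [a [b ->] <-]]; rewrite setTI; apply: open_meas.
apply: open_comp; last exact: interval_open.
by move=> x _; exact: coord_continuous.
Qed.

Lemma bigmax_meas d (T : measurableType d) (F : 'I_N -> T -> R) :
  (forall i, measurable_fun [set: T] (F i)) ->
  measurable_fun [set: T] (fun z => \big[Num.max/0]_(i < N) F i z).
Proof.
move=> mF.
suff H : forall s : seq 'I_N,
    measurable_fun [set: T] (fun z => \big[Num.max/0]_(i <- s) F i z) by exact: H.
elim => [|i s IH].
  by under eq_fun do rewrite big_nil; exact: measurable_cst.
under eq_fun do rewrite big_cons.
exact: measurable_maxr.
Qed.

Lemma linf_meas :
  measurable_fun [set: (Vk R N * Vk R N)%type]
    (fun z : Vk R N * Vk R N => linf_dist (z.1 : 'rV[R]_N) (z.2 : 'rV[R]_N)).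
Proof.
apply: bigmax_meas => i.
apply: measurableT_comp => //.
apply: measurable_funB.
  exact: measurableT_comp (coord_meas i) measurable_fst.
exact: measurableT_comp (coord_meas i) measurable_snd.
Qed.

Lemma linfE_meas :
  measurable_fun [set: (Vk R N * Vk R N)%type]
    (fun z : Vk R N * Vk R N => (linf_dist (z.1 : 'rV[R]_N) (z.2 : 'rV[R]_N))%:E).
Proof. by apply/measurable_EFinP; exact: linf_meas. Qed.
Lemma meas_forallF d (T : measurableType d) (I : finType) (P : I -> set T) :
  (forall i, measurable (P i)) -> measurable [set x | forall i, P i x].
Proof.
move=> mP.
suff H : forall s : seq I, measurable [set x | forall i, i \in s -> P i x].
  rewrite (_ : [set x | forall i, P i x] =
     [set x | forall i, i \in index_enum I -> P i x]); first exact: H.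
  by apply/seteqP; split => x /= Hx i; [move=> _|]; apply: Hx; rewrite ?mem_index_enum.
elim => [|i s IH].
  rewrite (_ : [set x | _] = setT); first exact: measurableT.
  by apply/seteqP; split => x //= _ i; rewrite in_nil.
rewrite (_ : [set x | _] = P i `&` [set x | forall j, j \in s -> P j x]).
  exact: measurableI.
apply/seteqP; split => x /=.
  by move=> H; split; [apply: H; rewrite mem_head|move=> j js; apply: H; rewrite in_cons js orbT].
by move=> [Pi H] j; rewrite in_cons => /orP[/eqP->//|]; exact: H.
Qed.

Lemma meas_existsF d (T : measurableType d) (I : finType) (P : I -> set T) :
  (forall i, measurable (P i)) -> measurable [set x | exists i, P i x].
Proof.
move=> mP.
rewrite (_ : [set x | exists i, P i x] = ~` [set x | forall i, (~` P i) x]).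
  apply: measurableC; apply: meas_forallF => i; exact: measurableC.
apply/seteqP; split => x /=.
  by move=> [i Pi] H; exact: (H i).
move=> H; apply: contrapT => H2; apply: H => i Pi; apply: H2; by exists i.
Qed.

Lemma coord_pre (i : 'I_N) (B : set R) : measurable B ->
  measurable [set c : Vk R N | B ((c : 'rV[R]_N) ord0 i)].
Proof. by move=> mB; have := coord_meas i measurableT _ mB; rewrite setTI. Qed.

Lemma coord_le_meas (i j : 'I_N) (b : bool) :
  measurable [set c : Vk R N | ((c : 'rV[R]_N) ord0 i <= (c : 'rV[R]_N) ord0 j) = b].
Proof.
have H := measurable_fun_ler (coord_meas i) (coord_meas j).
have := H measurableT [set b] I.
by rewrite setTI.
Qed.

Lemma const_meas d (T : measurableType d) (Q : Prop) : measurable [set _ : T | Q].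
Proof.
case: (pselect Q) => q.
  by rewrite (_ : [set _ | Q] = setT); [exact: measurableT|apply/seteqP; split].
by rewrite (_ : [set _ | Q] = set0); [exact: measurable0|apply/seteqP; split].
Qed.

Lemma onehot_set_meas (j : 'I_N) : measurable [set onehot R j : Vk R N].
Proof.
rewrite (_ : [set _] = [set c : Vk R N | forall i, (c : 'rV_N) ord0 i = (j == i)%:R]).
  apply: (@meas_forallF _ _ _ (fun i (c : Vk R N) => (c : 'rV_N) ord0 i = (j == i)%:R)) => i.
  exact: (coord_pre i _ (measurable_set1 ((j == i)%:R))).
apply/seteqP; split => c /=.
  by move=> -> i; rewrite /onehot mxE.
by move=> H; apply/rowP => i; rewrite /onehot mxE H.
Qed.

Definition Eset : set (Vk R N) := [set v | exists j, v = onehot R j].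

Lemma Eset_meas : measurable Eset.
Proof. apply: (@meas_existsF _ _ _ (fun j (v : Vk R N) => v = onehot R j)) => j; exact: onehot_set_meas. Qed.

Definition Gset (j : 'I_N) : set (Vk R N) :=
  [set c | forall i, `|(c : 'rV_N) ord0 i - (j == i)%:R| < 2^-1].

Lemma Gset_meas j : measurable (Gset j).
Proof.
apply: (@meas_forallF _ _ _ (fun i (c : Vk R N) => `|(c : 'rV_N) ord0 i - (j == i)%:R| < 2^-1)) => i /=.
have -> : (fun c : Vk R N => is_true (`|(c : 'rV_N) ord0 i - (j == i)%:R| < 2^-1)) =
    [set c : Vk R N | [set` `](j == i)%:R - 2^-1, (j == i)%:R + 2^-1[%R ] ((c : 'rV_N) ord0 i)].
  by apply: funext => c; rewrite /= in_itv /= ltr_distl.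
exact: (coord_pre i _ (measurable_itv _)).
Qed.
End Aux.

Section Argmax.
Variables (R : realType) (n : nat).

Lemma argmax_pat (c c' : 'rV[R]_n.+1) :
  (forall i l, (c ord0 i <= c ord0 l) = (c' ord0 i <= c' ord0 l)) -> argmax c = argmax c'.
Proof.
move=> H; rewrite /argmax /Order.arg_max /extremum.
congr odflt; apply: eq_pick => i /=.
by apply: eq_forallb => j; rewrite H.
Qed.

Lemma argmax_ge (c : 'rV[R]_n.+1) j : c ord0 j <= c ord0 (argmax c).
Proof.
rewrite /argmax; case: arg_maxP => // i _ H.
exact: H.
Qed.

Definition Sset (j : 'I_n.+1) : set (Vk R n.+1) := [set c | argmax c = j].

Definition Pat (b : {ffun 'I_n.+1 * 'I_n.+1 -> bool}) : set (Vk R n.+1) :=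
  [set c | forall p : 'I_n.+1 * 'I_n.+1, ((c : 'rV_n.+1) ord0 p.1 <= (c : 'rV_n.+1) ord0 p.2) = b p].

Lemma Pat_meas b : measurable (Pat b).
Proof.
apply: (@meas_forallF _ _ _ (fun p (c : Vk R n.+1) =>
   ((c : 'rV_n.+1) ord0 p.1 <= (c : 'rV_n.+1) ord0 p.2) = b p)) => p.
exact: coord_le_meas.
Qed.

Lemma Sset_meas j : measurable (Sset j).
Proof.
rewrite (_ : Sset j = [set c | exists b, (Pat b `&`
     [set _ | exists c0, Pat b c0 /\ argmax c0 = j]) c]).
  apply: (@meas_existsF _ _ _ (fun b => Pat b `&`
     [set _ | exists c0, Pat b c0 /\ argmax c0 = j])) => b.
  apply: measurableI; [exact: Pat_meas|exact: const_meas].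
apply/seteqP; split => c /=.
  move=> <-; exists [ffun p : 'I_n.+1 * 'I_n.+1 => (c : 'rV_n.+1) ord0 p.1 <= (c : 'rV_n.+1) ord0 p.2].
  have Pc : Pat [ffun p : 'I_n.+1 * 'I_n.+1 => (c : 'rV_n.+1) ord0 p.1 <= (c : 'rV_n.+1) ord0 p.2] c.
    by move=> p; rewrite ffunE.
  by split => //; exists c.
move=> [b [Pc [c0 [Pc0 <-]]]]; rewrite /Sset /=.
apply: argmax_pat => i l.
by rewrite (Pc (i, l)) (Pc0 (i, l)).
Qed.

Notation N := n.+1.
Local Notation G := (Gset R n.+1).

Lemma onehotE (i k : 'I_N) : (onehot R i) ord0 k = (i == k)%:R.
Proof. by rewrite /onehot mxE. Qed.

Lemma onehot_inj (i j : 'I_N) : onehot R i = onehot R j -> i = j.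
Proof.
move=> /rowP /(_ i); rewrite !onehotE eqxx.
by case: eqP => // _ /eqP; rewrite oner_eq0.
Qed.

Lemma linf_ge (u v : 'rV[R]_N) i : `|u ord0 i - v ord0 i| <= linf_dist u v.
Proof. by rewrite /linf_dist; exact: (le_bigmax _ (fun i => `|u ord0 i - v ord0 i|) i). Qed.

Lemma linf_ge0 (u v : 'rV[R]_N) : 0 <= linf_dist u v.
Proof. exact: le_trans (linf_ge u v ord0). Qed.

Lemma linf_onehot (i j : 'I_N) : linf_dist (onehot R i) (onehot R j) <= (i != j)%:R.
Proof.
rewrite /linf_dist; apply: (big_ind (fun x => x <= (i != j)%:R)) => //.
- by move=> x y hx hy; rewrite ge_max hx hy.
- move=> k _; rewrite !onehotE.
  case: (eqVneq i j) => [->|ij]; first by rewrite subrr normr0.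
  by case: eqP; case: eqP => //= _ _; rewrite ?subr0 ?sub0r ?subrr ?normrN ?normr1 ?normr0.
Qed.

Lemma onehot_G (i j : 'I_N) : G j (onehot R i : Vk R N) <-> i = j.
Proof.
split; last first.
  by move=> -> k; rewrite onehotE subrr normr0 invr_gt0 ltr0n.
move=> /(_ i); rewrite onehotE eqxx.
case: eqVneq => [->//|ji].
rewrite subr0 normr1 => h; exfalso; move: h.
by move=> h; lra.
Qed.

Lemma G_argmax (c : 'rV[R]_N) j : G j (c : Vk R N) -> argmax c = j.
Proof.
move=> Gc; apply/eqP/negPn/negP => aj.
have h1 := Gc j; have h2 := Gc (argmax c).
rewrite eqxx in h1; rewrite eq_sym (negbTE aj) in h2.
have h3 := argmax_ge c j.
move: h1 h2; rewrite !ltr_distl /= ?mulr1n ?mulr0n => /andP [h1 h1'] /andP [h2 h2'].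
lra.
Qed.

Lemma notG_linf (c : 'rV[R]_N) j : ~ G j (c : Vk R N) -> 2^-1 <= linf_dist c (onehot R j).
Proof.
move=> nG; have [i hi] : exists i, ~ (`|c ord0 i - (j == i)%:R| < 2^-1).
  by apply: contrapT => H; apply: nG => i; apply: contrapT => hi; apply: H; exists i.
apply: le_trans (linf_ge c (onehot R j) i); rewrite onehotE.
by move/negP: hi; rewrite -leNgt.
Qed.
End Argmax.

Section Measures.
Variables (R : realType) (n : nat).
Local Notation N := n.+1.
Local Notation G := (Gset R n.+1).
Local Open Scope ereal_scope.

Lemma GL d (T : measurableType d) (mu : probability T R) (g : T -> 'I_N) :
  (forall j, measurable [set x | g x = j]) ->
  forall A : set (Vk R N), mu [set x | A (onehot R (g x))] =
    (\sum_(j < N) fine (mu [set x | g x = j]) * \1_A (onehot R j : Vk R N))%:E.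
Proof.
move=> mg A.
have -> : [set x | A (onehot R (g x))] =
    \big[setU/set0]_(j < N | `[< A (onehot R j) >]) [set x | g x = j].
  rewrite -bigcup_seq_cond; apply/seteqP; split => x /=.
    move=> Ax; exists (g x) => //=; rewrite mem_index_enum /=; exact/asboolP.
  by move=> [j /= /andP[_ /asboolP Aj] ->].
rewrite measure_bigsetU_ord_cond //; last first.
  apply/trivIsetP => i j _ _ ij; apply/seteqP; split => x // [/= gi gj].
  by move: ij; rewrite -gi -gj eqxx.
rewrite -sumEFin big_mkcond /=; apply: eq_bigr => j _; rewrite indicE.
case: (asboolP (A (onehot R j))) => Aj.
  by rewrite mem_set // mulr1 fineK // fin_num_measure.
by rewrite memNset // mulr0.
Qed.

Lemma GL1 d (T : measurableType d) (mu : probability T R) (g : T -> 'I_N) :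
  (forall j, measurable [set x | g x = j]) ->
  (\sum_(j < N) fine (mu [set x | g x = j]) = 1)%R.
Proof.
move=> mg; have := @GL _ _ mu g mg setT.
rewrite (_ : [set x | setT _] = setT); last by apply/seteqP; split.
rewrite probability_setT => /esym /eqP; rewrite eqe => /eqP <-.
by apply: eq_bigr => j _; rewrite indicE mem_set // mulr1.
Qed.


Lemma LB (pi : probability (Vk R N * Vk R N)%type R) (m : 'I_N -> R) :
  pi (snd @^-1` Eset R N) = 1 ->
  (forall j, pi (G j `*` [set onehot R j : Vk R N]) <= (m j)%:E) ->
  ((2^-1 * (1 - \sum_(j < N) m j))%:E <= \int[pi]_z (linf_dist z.1 z.2)%:E).
Proof.
move=> pE pF.
pose F j : set (Vk R N * Vk R N) := G j `*` [set onehot R j : Vk R N].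
have mF j : measurable (F j) by apply: measurableX; [exact: Gset_meas|exact: onehot_set_meas].
have mE : measurable (snd @^-1` Eset R N : set (Vk R N * Vk R N)).
  by rewrite -[X in measurable X]setTI; apply: measurable_snd => //; exact: Eset_meas.
have pw z : ((2^-1)%:E * (\1_(snd @^-1` Eset R N) z)%:E <=
    (linf_dist z.1 z.2)%:E + \sum_(j < N) (2^-1)%:E * (\1_(F j) z)%:E).
  case: z => c v /=; rewrite indicE.
  case: (pselect (Eset R N v)) => Ev; last first.
    rewrite memNset // mulr0n mule0; apply: adde_ge0; first by rewrite lee_fin linf_ge0.
    by apply: sume_ge0 => j _; apply: mule_ge0; rewrite lee_fin // indicE ler0n.
  case: Ev => j vj; rewrite mem_set; last by exists j.
  rewrite /= ?mulr1n ?mule1.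
  case: (pselect (G j c)) => Gc.
    rewrite -[X in X <= _]add0e; apply: leeD; first by rewrite lee_fin linf_ge0.
    rewrite (bigD1 j) //= -[X in X <= _]adde0; apply: leeD.
      by rewrite indicE mem_set ?mule1 //; split => //.
    by apply: sume_ge0 => k _; apply: mule_ge0; rewrite lee_fin // indicE ler0n.
  rewrite -[X in X <= _]adde0; apply: leeD.
    by rewrite lee_fin vj; exact: notG_linf.
  by apply: sume_ge0 => k _; apply: mule_ge0; rewrite lee_fin // indicE ler0n.
have mI j : measurable_fun setT (fun z : Vk R N * Vk R N => (\1_(F j) z)%:E : \bar R).
  by apply/measurable_EFinP; exact: measurable_indic.
have mA : measurable_fun setT (fun z : Vk R N * Vk R N => (\1_(snd @^-1` Eset R N) z)%:E : \bar R).
  by apply/measurable_EFinP; exact: measurable_indic.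
have h : \int[pi]_z ((2^-1)%:E * (\1_(snd @^-1` Eset R N) z)%:E) <=
    \int[pi]_z ((linf_dist z.1 z.2)%:E + \sum_(j < N) (2^-1)%:E * (\1_(F j) z)%:E).
  apply: ge0_le_integral => //.
  - by apply: emeasurable_funM => //; exact: measurable_cst.
  - apply: emeasurable_funD; first exact: linfE_meas.
    apply: emeasurable_sum => j; apply: emeasurable_funM => //; exact: measurable_cst.
have e1 : \int[pi]_z ((2^-1)%:E * (\1_(snd @^-1` Eset R N) z)%:E) = (2^-1)%:E.
  rewrite ge0_integralZl_EFin //; try by move=> z _; rewrite lee_fin indicE.
  by rewrite integral_indic // setIT [X in _ * X]pE mule1.
have e2 : \int[pi]_z ((linf_dist z.1 z.2)%:E + \sum_(j < N) (2^-1)%:E * (\1_(F j) z)%:E) =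
   \int[pi]_z (linf_dist z.1 z.2)%:E + \sum_(j < N) (2^-1)%:E * pi (F j).
  rewrite ge0_integralD //; last 4 first.
  - by move=> z _; rewrite lee_fin linf_ge0.
  - exact: linfE_meas.
  - by move=> z _; apply: sume_ge0 => j _; apply: mule_ge0; rewrite lee_fin ?indicE.
  - apply: emeasurable_sum => j; apply: emeasurable_funM => //; exact: measurable_cst.
  rewrite ge0_integral_sum //; last first.
    move=> j; apply: emeasurable_funM => //; exact: measurable_cst.
  congr (_ + _); apply: eq_bigr => j _.
  rewrite ge0_integralZl_EFin //; try by move=> z _; rewrite lee_fin indicE.
  by rewrite integral_indic // setIT.
rewrite e1 e2 in h.
have hs : \sum_(j < N) (2^-1)%:E * pi (F j) <= (2^-1 * \sum_(j < N) m j)%:E.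
  rewrite mulr_sumr -sumEFin; apply: lee_sum => j _; rewrite EFinM.
  by apply: lee_wpmul2l; [rewrite lee_fin invr_ge0 ler0n|exact: pF].
have h2 := le_trans h (leeD2l _ hs).
by rewrite mulrBr mulr1 EFinB leeBlDr.
Qed.


End Measures.

Section Weights.
Variables (R : realType) (N : nat) (p t : 'I_N -> R).
Hypotheses (p0 : forall i, 0 <= p i) (t0 : forall i, 0 <= t i)
  (p1 : \sum_i p i = 1) (t1 : \sum_i t i = 1).

Definition mn i := Num.min (p i) (t i).
Definition rp i := p i - mn i.
Definition rt i := t i - mn i.
Definition DD := 1 - \sum_i mn i.
Definition ww i j := (i == j)%:R * mn i + rp i * rt j * DD^-1.

Lemma rp_ge0 i : 0 <= rp i.
Proof. by rewrite subr_ge0 /mn ge_min lexx. Qed.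
Lemma rt_ge0 i : 0 <= rt i.
Proof. by rewrite subr_ge0 /mn ge_min lexx orbT. Qed.
Lemma mn_ge0 i : 0 <= mn i.
Proof. by rewrite /mn le_min p0 t0. Qed.
Lemma sum_rp : \sum_i rp i = DD.
Proof. by rewrite /rp sumrB p1. Qed.
Lemma sum_rt : \sum_i rt i = DD.
Proof. by rewrite /rt sumrB t1. Qed.
Lemma DD_ge0 : 0 <= DD.
Proof. by rewrite -sum_rp; apply: sumr_ge0 => i _; exact: rp_ge0. Qed.

Lemma ww_ge0 i j : 0 <= ww i j.
Proof.
apply: addr_ge0; first by apply: mulr_ge0; [exact: ler0n|exact: mn_ge0].
apply: mulr_ge0; last by rewrite invr_ge0 DD_ge0.
by apply: mulr_ge0; [exact: rp_ge0|exact: rt_ge0].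
Qed.

Lemma DD0_rp : DD = 0 -> forall i, rp i = 0.
Proof.
move=> D0 i; apply: (psumr_eq0P (P := xpredT) (F := rp)) => //.
  by move=> k _; exact: rp_ge0.
by rewrite sum_rp.
Qed.
Lemma DD0_rt : DD = 0 -> forall i, rt i = 0.
Proof.
move=> D0 i; apply: (psumr_eq0P (P := xpredT) (F := rt)) => //.
  by move=> k _; exact: rt_ge0.
by rewrite sum_rt.
Qed.

Lemma ww_row i : \sum_j ww i j = p i.
Proof.
rewrite big_split /= (bigD1 i) //= eqxx mul1r big1 ?addr0; last first.
  by move=> j /negbTE; rewrite eq_sym => ->; rewrite mul0r.
rewrite -mulr_suml -mulr_sumr sum_rt.
have [D0|D0] := eqVneq DD 0.
  by rewrite (DD0_rp D0 i) !mul0r addr0 -[p i](subrK (mn i)) -/(rp i) (DD0_rp D0 i) add0r.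
by rewrite mulfK // /rp addrC subrK.
Qed.

Lemma ww_col j : \sum_i ww i j = t j.
Proof.
rewrite big_split /= (bigD1 j) //= eqxx mul1r big1 ?addr0; last first.
  by move=> i /negbTE ->; rewrite mul0r.
rewrite -mulr_suml -mulr_suml sum_rp.
have [D0|D0] := eqVneq DD 0.
  by rewrite (DD0_rt D0 j) mulr0 mul0r addr0 -[t j](subrK (mn j)) -/(rt j) (DD0_rt D0 j) add0r.
by rewrite [DD * _]mulrC mulfK // /rt addrC subrK.
Qed.

Lemma ww_cost (c : 'I_N -> 'I_N -> R) : (forall i j, c i j <= (i != j)%:R) ->
  \sum_i \sum_j ww i j * c i j <= DD.
Proof.
move=> hc.
apply: (@le_trans _ _ (\sum_i \sum_j rp i * rt j * DD^-1)).
  apply: ler_sum => i _; apply: ler_sum => j _.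
  have [->|ij] := eqVneq i j.
    apply: (le_trans (y := ww j j * 0)).
      by apply: ler_wpM2l; [exact: ww_ge0|move: (hc j j); rewrite eqxx].
    rewrite mulr0; apply: mulr_ge0; last by rewrite invr_ge0 DD_ge0.
    by apply: mulr_ge0; [exact: rp_ge0|exact: rt_ge0].
  rewrite /ww (negbTE ij) mul0r add0r.
  apply: (le_trans (y := rp i * rt j * DD^-1 * 1)); last by rewrite mulr1.
  apply: ler_wpM2l; last by move: (hc i j); rewrite ij.
  apply: mulr_ge0; last by rewrite invr_ge0 DD_ge0.
  by apply: mulr_ge0; [exact: rp_ge0|exact: rt_ge0].
rewrite (eq_bigr (fun i => rp i * DD * DD^-1)); last first.
  by move=> i _; rewrite -mulr_suml -mulr_sumr sum_rt.
rewrite -mulr_suml -mulr_suml sum_rp.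
have [->|D0] := eqVneq DD 0; first by rewrite !mul0r.
by rewrite mulfK.
Qed.
End Weights.

Lemma mnormalize1 (R : realType) d (T : measurableType d) (mu : {measure set T -> \bar R})
  (P : probability T R) : mu setT = 1%E -> mnormalize mu P = mu.
Proof.
move=> h; apply/funext => x; rewrite /mnormalize h onee_eq0 /= invr1 mule1 //.
Qed.

Section Coupling.
Variables (R : realType) (n : nat).
Local Notation N := n.+1.
Local Notation T := (Vk R N * Vk R N)%type.
Variables (w : 'I_N -> 'I_N -> R) (hw : forall i j, 0 <= w i j).
Local Open Scope ereal_scope.

Definition ptn (i j : nat) : T := ((onehot R (inord i) : Vk R N), (onehot R (inord j) : Vk R N)).

Definition cmu : {measure set T -> \bar R} :=
  msum (fun i => msum (fun j => mscale (NngNum (hw (inord i) (inord j))) \d_(ptn i j)) N) N.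

Lemma cmuE A : cmu A = \sum_(i < N) \sum_(j < N) (w i j)%:E * \d_(((onehot R i : Vk R N), (onehot R j : Vk R N)) : T) A.
Proof.
rewrite /cmu /msum /mscale /=; apply: eq_bigr => i _; apply: eq_bigr => j _.
by rewrite /ptn !inord_val.
Qed.

Hypothesis w1 : (\sum_i \sum_j w i j = 1)%R.

Lemma cmuT : cmu setT = 1.
Proof.
rewrite cmuE -w1 -sumEFin; apply: eq_bigr => i _; rewrite -sumEFin.
by apply: eq_bigr => j _; rewrite diracT mule1.
Qed.

Definition cpi : probability T R := mnormalize cmu \d_(ptn 0 0).

Lemma cpiE : (cpi : set T -> \bar R) = cmu.
Proof. exact: mnormalize1 cmuT. Qed.

Lemma cpi_fst (A : set (Vk R N)) :
  cpi (fst @^-1` A) = (\sum_i (\sum_j w i j) * \1_A (onehot R i : Vk R N))%:E.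
Proof.
rewrite cpiE cmuE -sumEFin; apply: eq_bigr => i _; rewrite mulr_suml -sumEFin.
by apply: eq_bigr => j _; rewrite diracE indicE EFinM.
Qed.

Lemma cpi_snd (A : set (Vk R N)) :
  cpi (snd @^-1` A) = (\sum_j (\sum_i w i j) * \1_A (onehot R j : Vk R N))%:E.
Proof.
rewrite cpiE cmuE exchange_big -sumEFin; apply: eq_bigr => j _; rewrite mulr_suml -sumEFin.
by apply: eq_bigr => i _; rewrite diracE indicE EFinM.
Qed.

Lemma cpi_int : \int[cpi]_z (linf_dist z.1 z.2)%:E =
  (\sum_i \sum_j w i j * linf_dist (onehot R i) (onehot R j))%:E.
Proof.
rewrite cpiE /cmu ge0_integral_measure_sum //; last 2 first.
- by move=> z _; rewrite lee_fin linf_ge0.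
- exact: linfE_meas.
rewrite -sumEFin; apply: eq_bigr => i _.
rewrite ge0_integral_measure_sum //; last 2 first.
- by move=> z _; rewrite lee_fin linf_ge0.
- exact: linfE_meas.
rewrite -sumEFin; apply: eq_bigr => j _.
rewrite ge0_integral_mscale //; last 2 first.
- exact: linfE_meas.
- by move=> z _; rewrite lee_fin linf_ge0.
rewrite integral_dirac //; last exact: linfE_meas.
by rewrite diracT mul1e /ptn /= !inord_val EFinM.
Qed.
End Coupling.

Section UBsec.
Variables (R : realType) (n : nat).
Local Notation N := n.+1.
Local Open Scope ereal_scope.

Lemma UB (P Q : set (Vk R N) -> \bar R) (p t : 'I_N -> R) :
  (forall i, (0 <= p i)%R) -> (forall i, (0 <= t i)%R) ->
  (\sum_i p i = 1)%R -> (\sum_i t i = 1)%R ->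
  (forall A, measurable A -> P A = (\sum_i p i * \1_A (onehot R i : Vk R N))%:E) ->
  (forall A, measurable A -> Q A = (\sum_i t i * \1_A (onehot R i : Vk R N))%:E) ->
  exists pi : probability (Vk R N * Vk R N)%type R, is_coupling pi P Q /\
    \int[pi]_z (linf_dist z.1 z.2)%:E <= (1 - \sum_i Num.min (p i) (t i))%:E.
Proof.
move=> p0 t0 p1 t1 HP HQ.
have hw : forall i j, (0 <= @ww R N p t i j)%R by move=> i j; exact: ww_ge0.
have w1 : (\sum_i \sum_j @ww R N p t i j = 1)%R.
  by rewrite -p1; apply: eq_bigr => i _; exact: ww_row.
exists (@cpi R n _ hw); split.
  move=> A mA; split.
    by rewrite (@cpi_fst R n _ hw w1) HP //; congr (_%:E); apply: eq_bigr => i _; rewrite ww_row.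
  have := @cpi_snd R n _ hw w1 A; rewrite /= => ->.
  by rewrite HQ //; congr (_%:E); apply: eq_bigr => i _; rewrite ww_col.
rewrite (@cpi_int R n _ hw w1) lee_fin.
apply: ww_cost => //; exact: linf_onehot.
Qed.
End UBsec.

Lemma min3 (R : realType) (q p s t : R) : q <= p ->
  Num.min q s + Num.min s t <= s + Num.min p t.
Proof.
move=> qp.
case: (leP q s) => h1; case: (leP s t) => h2; case: (leP p t) => h3; lra.
Qed.

Lemma sum_min3 (R : realType) N (q p s t : 'I_N -> R) : (forall i, q i <= p i) ->
  \sum_i s i = 1 ->
  1 - \sum_i Num.min (p i) (t i) <=
  (1 - \sum_i Num.min (q i) (s i)) + (1 - \sum_i Num.min (s i) (t i)).
Proof.
move=> qp s1.
have : \sum_i (Num.min (q i) (s i) + Num.min (s i) (t i)) <= \sum_i (s i + Num.min (p i) (t i)).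
  by apply: ler_sum => i _; exact: min3.
rewrite !big_split /= s1; lra.
Qed.

Local Open Scope ereal_scope.

Lemma mle (R : realType) d (T : measurableType d) (pi : probability T R) (A B : set T) :
  measurable A -> measurable B -> A `<=` B -> pi A <= pi B.
Proof. by move=> mA mB AB; apply: le_measure => //; rewrite inE. Qed.

Theorem mainTheorem6 (R : realType) (n : nat) (d : measure_display)
  (X : measurableType d) (f : X -> 'rV[R]_n.+1)
  (f_meas : measurable_fun [set: X] (f : X -> Vk R n.+1))
  (f_simplex : forall x, in_simplex (f x))
  (PS PT : probability (X * label n)%type R) :
  let fPT := pushforward PT (fun z : X * label n => (f z.1 : Vk R n.+1)) in
  let PSy := pushforward PS (fun z : X * label n => (onehot R z.2 : Vk R n.+1)) in
  let PTy := pushforward PT (fun z : X * label n => (onehot R z.2 : Vk R n.+1)) in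
  let Ppseudo := pushforward PT
                   (fun z : X * label n => (onehot R (argmax (f z.1)) : Vk R n.+1)) in
  let eps_COT := Winf fPT PSy in
  (eps_COT >= (2^-1)%:E * Winf Ppseudo PTy - Winf PSy PTy)%E.
Proof.
cbv zeta.
set fPT := pushforward PT (fun z : X * label n => (f z.1 : Vk R n.+1)).
set PSy := pushforward PS (fun z : X * label n => (onehot R z.2 : Vk R n.+1)).
set PTy := pushforward PT (fun z : X * label n => (onehot R z.2 : Vk R n.+1)).
set Ppseudo := pushforward PT (fun z : X * label n => (onehot R (argmax (f z.1)) : Vk R n.+1)).

pose Z := (X * label n)%type.
have mff : measurable_fun [set: Z] (fun z : Z => (f z.1 : Vk R n.+1)).
  exact: measurableT_comp f_meas measurable_fst.
have ms j : measurable [set z : Z | z.2 = j].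
  by have := @measurable_snd _ _ X (label n) measurableT [set j] I; rewrite setTI.
have ma j : measurable [set z : Z | argmax (f z.1) = j].
  by have := mff measurableT _ (Sset_meas R n j); rewrite setTI.
have mq j : measurable [set z : Z | Gset R n.+1 j (f z.1)].
  by have := mff measurableT _ (Gset_meas R n.+1 j); rewrite setTI.
pose s j := fine (PS [set z : Z | z.2 = j]).
pose t j := fine (PT [set z : Z | z.2 = j]).
pose p j := fine (PT [set z : Z | argmax (f z.1) = j]).
pose q j := fine (PT [set z : Z | Gset R n.+1 j (f z.1)]).
have sE j : PS [set z : Z | z.2 = j] = (s j)%:E by rewrite fineK // fin_num_measure.
have tE j : PT [set z : Z | z.2 = j] = (t j)%:E by rewrite fineK // fin_num_measure.
have pE j : PT [set z : Z | argmax (f z.1) = j] = (p j)%:E by rewrite fineK // fin_num_measure.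
have qE j : PT [set z : Z | Gset R n.+1 j (f z.1)] = (q j)%:E by rewrite fineK // fin_num_measure.
have s0 j : (0 <= s j)%R by apply: fine_ge0.
have t0 j : (0 <= t j)%R by apply: fine_ge0.
have p0 j : (0 <= p j)%R by apply: fine_ge0.
have s1 : (\sum_j s j = 1)%R by exact: (@GL1 R n _ _ PS (fun z : Z => z.2)).
have t1 : (\sum_j t j = 1)%R by exact: (@GL1 R n _ _ PT (fun z : Z => z.2)).
have p1 : (\sum_j p j = 1)%R by exact: (@GL1 R n _ _ PT (fun z : Z => argmax (f z.1))).
have qp j : (q j <= p j)%R.
  rewrite -lee_fin -qE -pE; apply: mle => //.
  by move=> z /= Gz; exact: G_argmax.
have HPs A : measurable A -> PSy A = (\sum_i s i * \1_A (onehot R i : Vk R n.+1))%:E.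
  by move=> _; exact: (@GL R n _ _ PS (fun z : Z => z.2) ms A).
have HPt A : measurable A -> PTy A = (\sum_i t i * \1_A (onehot R i : Vk R n.+1))%:E.
  by move=> _; exact: (@GL R n _ _ PT (fun z : Z => z.2) ms A).
have HPp A : measurable A -> Ppseudo A = (\sum_i p i * \1_A (onehot R i : Vk R n.+1))%:E.
  by move=> _; exact: (@GL R n _ _ PT (fun z : Z => argmax (f z.1)) ma A).
have [pi3 [c3 i3]] := @UB R n Ppseudo PTy p t p0 t0 p1 t1 HPp HPt.
have W3le : Winf Ppseudo PTy <= (1 - \sum_i Num.min (p i) (t i))%:E.
  by apply: le_trans i3; apply: ereal_inf_lbound; exists pi3.
have W30 : 0 <= Winf Ppseudo PTy.
  by apply/ereal_infP => y [pi _ <-]; apply: integral_ge0 => z _; rewrite lee_fin linf_ge0.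
have EsetS : forall (P : probability Z R), pushforward P (fun z : Z => (onehot R z.2 : Vk R n.+1)) (Eset R n.+1) = 1.
  move=> P; rewrite /pushforward (_ : _ @^-1` _ = setT) ?probability_setT //.
  by apply/seteqP; split => // x _ /=; exists x.2.
have oneS : forall (P : probability Z R) j, pushforward P (fun z : Z => (onehot R z.2 : Vk R n.+1)) [set onehot R j : Vk R n.+1] = P [set z : Z | z.2 = j].
  move=> P j; rewrite /pushforward; congr (P _).
  by apply/seteqP; split => x /=; [exact: onehot_inj|move=> ->].
have mGE j : measurable (Gset R n.+1 j `*` [set onehot R j : Vk R n.+1]).
  by apply: measurableX; [exact: Gset_meas|exact: onehot_set_meas].
have W1ge : (2^-1 * (1 - \sum_i Num.min (q i) (s i)))%:E <= Winf fPT PSy.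
  apply/ereal_infP => y [pi cpl <-]; apply: LB.
    by have [_ ->] := cpl _ (Eset_meas R n.+1); exact: EsetS.
  move=> j; rewrite EFin_min le_min; apply/andP; split.
    apply: (@le_trans _ _ (pi (fst @^-1` Gset R n.+1 j))).
      apply: mle => //; last by move=> x [].
      by rewrite -[X in measurable X]setTI; apply: measurable_fst => //; exact: Gset_meas.
    by have [-> _] := cpl _ (Gset_meas R n.+1 j); rewrite -qE.
  apply: (@le_trans _ _ (pi (snd @^-1` [set onehot R j : Vk R n.+1]))).
    apply: mle => //; last by move=> x [].
    by rewrite -[X in measurable X]setTI; apply: measurable_snd => //; exact: onehot_set_meas.
  by have [_ ->] := cpl _ (onehot_set_meas R n.+1 j); rewrite /PSy oneS sE.
have W2ge : (2^-1 * (1 - \sum_i Num.min (s i) (t i)))%:E <= Winf PSy PTy.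
  apply/ereal_infP => y [pi cpl <-]; apply: LB.
    by have [_ ->] := cpl _ (Eset_meas R n.+1); exact: EsetS.
  move=> j; rewrite EFin_min le_min; apply/andP; split.
    apply: (@le_trans _ _ (pi (fst @^-1` Gset R n.+1 j))).
      apply: mle => //; last by move=> x [].
      by rewrite -[X in measurable X]setTI; apply: measurable_fst => //; exact: Gset_meas.
    have [-> _] := cpl _ (Gset_meas R n.+1 j); rewrite -sE /PSy /pushforward.
    by rewrite le_eqVlt; apply/orP; left; apply/eqP; congr (PS _); apply/seteqP; split => x /=; move/onehot_G.
  apply: (@le_trans _ _ (pi (snd @^-1` [set onehot R j : Vk R n.+1]))).
    apply: mle => //; last by move=> x [].
    by rewrite -[X in measurable X]setTI; apply: measurable_snd => //; exact: onehot_set_meas.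
  by have [_ ->] := cpl _ (onehot_set_meas R n.+1 j); rewrite /PTy oneS tE.
have hx := @sum_min3 R n.+1 q p s t qp s1.
move: (Winf Ppseudo PTy) (Winf PSy PTy) (Winf fPT PSy) W3le W30 W2ge W1ge => W3 W2 W1.
case: W3 => [r3| |] //= h3 h30.
  case: W2 => [r2| |] h2 h1.
  - rewrite -EFinM -EFinB; apply: le_trans h1; rewrite lee_fin.
    rewrite lee_fin in h3; rewrite lee_fin in h2; rewrite lee_fin in h30. lra.
  - by rewrite -EFinM addeNy leNye.
  - by rewrite leeNy_eq in h2.
Qed.
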